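(* Let $V=K[y_1,\dots,y_s]$ be a polynomial ring over a field $K$, bigraded by $\operatorname{bideg}(y_i)=(d_i,1)$ with integers $d_i\ge1$, and let $M$ be a finitely generated bigraded $V$-module. For each $k$ with $M_{( *,k)}:=\bigoplus_d M_{(d,k)}\neq0$ put $\alpha_M(k)=\min\{d:M_{(d,k)}\neq0\}$ and $\omega_M(k)=\max\{d:M_{(d,k)}\neq0\}$. Then either $M_{( *,k)}=0$ for all $k\gg0$, or there exist integers $a,b,c,e$ such that $\alpha_M(k)=ak+b$ and $\omega_M(k)=ck+e$ for all $k\gg0$. *)

(* Defs.v *)
From HB Require Import structures.
From mathcomp Require Import all_boot all_order all_algebra.
Set Implicit Arguments. Unset Strict Implicit. Unset Printing Implicit Defensive.
Import Order.TTheory GRing.Theory Num.Theory.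
Local Open Scope ring_scope.

(* A module over V = K[y_1,...,y_s] is encoded (as usual) by a K-vector space
   M together with s pairwise commuting K-linear endomorphisms Y i
   (the action of the variable y_i; indices i : 'I_s). *)
Definition poly_module_action (K : fieldType) (M : lmodType K) (s : nat)
    (Y : 'I_s -> M -> M) : Prop :=
  (forall i (a : K) (x y : M), Y i (a *: x + y) = a *: Y i x + Y i y) /\
  (forall i j (x : M), Y i (Y j x) = Y j (Y i x)).

(* G d k is the homogeneous component M_(d,k) (as a predicate on M). *)
Definition bigraded_module (K : fieldType) (M : lmodType K) (s : nat)
    (deg : 'I_s -> nat) (Y : 'I_s -> M -> M) (G : int -> int -> M -> Prop) : Prop :=
  poly_module_action Y /\
  (forall d k, G d k 0) /\
  (forall d k (a : K) (x y : M), G d k x -> G d k y -> G d k (a *: x + y)) /\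
  (forall m : M, exists (ds : seq (int * int)) (xs : int * int -> M),
      (forall p, p \in ds -> G p.1 p.2 (xs p)) /\ m = \sum_(p <- ds) xs p) /\
  (forall (ds : seq (int * int)) (xs : int * int -> M),
      uniq ds -> (forall p, p \in ds -> G p.1 p.2 (xs p)) ->
      \sum_(p <- ds) xs p = 0 -> forall p, p \in ds -> xs p = 0) /\
  (forall i d k (x : M), G d k x -> G (d + (deg i)%:Z) (k + 1) (Y i x)).

Inductive generated_by (K : fieldType) (M : lmodType K) (s : nat)
    (Y : 'I_s -> M -> M) (gens : seq M) : M -> Prop :=
  | gen_in x : x \in gens -> generated_by Y gens x
  | gen_zero : generated_by Y gens 0
  | gen_add x y : generated_by Y gens x -> generated_by Y gens y ->
      generated_by Y gens (x + y)
  | gen_scale (a : K) x : generated_by Y gens x -> generated_by Y gens (a *: x)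
  | gen_act i x : generated_by Y gens x -> generated_by Y gens (Y i x).

Definition finitely_generated (K : fieldType) (M : lmodType K) (s : nat)
    (Y : 'I_s -> M -> M) : Prop :=
  exists gens : seq M, forall m : M, generated_by Y gens m.

Definition comp_nz (K : fieldType) (M : lmodType K) (G : int -> int -> M -> Prop)
    (d k : int) : Prop :=
  exists m : M, G d k m /\ m <> 0.

Definition is_alpha (K : fieldType) (M : lmodType K) (G : int -> int -> M -> Prop)
    (k a : int) : Prop :=
  comp_nz G a k /\ forall d, comp_nz G d k -> a <= d.

Definition is_omega (K : fieldType) (M : lmodType K) (G : int -> int -> M -> Prop)
    (k w : int) : Prop :=
  comp_nz G w k /\ forall d, comp_nz G d k -> d <= w.

(* Main.v *)
From Stdlib Require Import Classical.
Require Import Defs.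
From HB Require Import structures.
From mathcomp Require Import all_boot all_order all_algebra zify.
Import Order.TTheory GRing.Theory Num.Theory.
Local Open Scope ring_scope.

Lemma int_max_ex (P : int -> Prop) (U : int) :
  (exists x, P x) -> (forall x, P x -> x <= U) ->
  exists x, P x /\ forall y, P y -> y <= x.
Proof.
move=> [x0 Px0] HU.
suff: forall n : nat, forall x, P x -> U - x <= n%:Z ->
   exists x, P x /\ forall y, P y -> y <= x.
  by move=> /(_ `|U - x0|%N x0 Px0); apply; have := HU _ Px0; lia.
elim=> [|n IH] x Px Hx.
  exists x; split=> // y Py; have := HU _ Py; lia.
case: (classic (exists y, P y /\ x < y)) => [[y [Py xy]]|NE].
  by apply: (IH y Py); lia.
exists x; split=> // y Py.
case: (lerP y x) => // xy; exfalso; apply: NE; by exists y.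
Qed.

Lemma int_min_ex (P : int -> Prop) (L : int) :
  (exists x, P x) -> (forall x, P x -> L <= x) ->
  exists x, P x /\ forall y, P y -> x <= y.
Proof.
move=> [x0 Px0] HL.
have [|y Py|x [Px Hx]] := @int_max_ex (fun x => P (- x)) (- L).
- by exists (- x0); rewrite opprK.
- by have := HL _ Py; lia.
exists (- x); split=> // y Py; have := Hx (- y); rewrite opprK => /(_ Py); lia.
Qed.

Lemma omega_lin (S : int -> int -> Prop) (c C0 C1 k1 : int) :
 (forall k, k1 <= k -> forall d, S k d -> d <= c * k + C1) ->
 (forall k, k1 <= k -> S k (c * k + C0)) ->
 (forall k, k1 <= k -> forall d, S (k+1) d -> exists d', S k d' /\ d <= d' + c) ->
 exists e k0, forall k, k0 <= k -> S k (c*k+e) /\ (forall d, S k d -> d <= c*k+e).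
Proof.
move=> H1 H2 H3.
pose T k v := S k (c * k + v).
pose Mx k v := T k v /\ forall v', T k v' -> v' <= v.
have Mex : forall k, k1 <= k -> exists v, Mx k v.
  move=> k kk; apply: (@int_max_ex _ C1).
    by exists C0; apply: H2.
  move=> x Tx; have := H1 _ kk _ Tx; lia.
have Mlow : forall k v, k1 <= k -> Mx k v -> C0 <= v.
  by move=> k v kk [_ Hv]; apply: Hv; apply: H2.
have Mmono : forall k v v', k1 <= k -> Mx k v -> Mx (k+1) v' -> v' <= v.
  move=> k v v' kk [Tv Hv] [Tv' _].
  have [d' [Sd' Hd']] := H3 _ kk _ Tv'.
  have : T k (d' - c * k) by rewrite /T addrC subrK.
  move/Hv; move: Hd'; rewrite mulrDr mulr1; lia.
have ne : exists v, exists k, k1 <= k /\ Mx k v.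
  by have [v Mv] := Mex k1 (lexx _); exists v, k1.
have lb : forall v, (exists k, k1 <= k /\ Mx k v) -> C0 <= v.
  by move=> v [k [kk Mk]]; exact: Mlow _ _ kk Mk.
have [vm [[k2 [k2k Mk2]] Hvm]] := @int_min_ex _ C0 ne lb.
have key : forall n : nat, forall v, Mx (k2 + n%:Z) v -> v = vm.
  elim=> [|n IH] v Mv.
    rewrite addr0 in Mv.
    apply/eqP; rewrite eq_le; apply/andP; split.
      by apply: Mk2.2; apply: Mv.1.
    by apply: Mv.2; apply: Mk2.1.
  have kk : k1 <= k2 + n%:Z by lia.
  have [u Mu] := Mex _ kk.
  have := IH _ Mu => Eu.
  have kk' : k2 + n.+1%:Z = k2 + n%:Z + 1 by lia.
  rewrite kk' in Mv.
  have := Mmono _ _ _ kk Mu Mv.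
  have : vm <= v by apply: Hvm; exists (k2 + n%:Z + 1); split => //; lia.
  lia.
exists vm, k2 => k kk.
have E : k = k2 + `|k - k2|%N%:Z by rewrite gez0_abs; lia.
have kk1 : k1 <= k by lia.
have [v Mv] := Mex _ kk1.
move: (Mv); rewrite {1}E => /key Ev; subst v.
split; first exact: Mv.1.
move=> d Sd.
have : T k (d - c * k) by rewrite /T addrC subrK.
move/Mv.2; lia.
Qed.

Lemma sum_if_eq (T : eqType) (V : nmodType) (r : seq T) x (v : V) :
  uniq r -> x \in r -> \sum_(p <- r) (if p == x then v else 0) = v.
Proof.
elim: r => //= y r IH /andP[yr ur]; rewrite in_cons big_cons => /orP[/eqP->|xr].
  rewrite eqxx big1_seq ?addr0 // => p /andP[_ pr]; case: eqP => // E.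
  by rewrite -E pr in yr.
have /negbTE -> : y != x by apply: contraNneq yr => ->.
by rewrite IH // add0r.
Qed.

Lemma sum_group (T X : eqType) (V : nmodType) (l : seq T) (f : T -> X)
   (ds : seq X) (F : T -> V) :
  uniq ds -> (forall t, t \in l -> f t \in ds) ->
  \sum_(p <- ds) \sum_(t <- l | f t == p) F t = \sum_(t <- l) F t.
Proof.
move=> uds; elim: l => [|x l IH] Hl.
  by rewrite big_nil big1 // => p _; rewrite big_nil.
have E : forall p, \sum_(t <- x :: l | f t == p) F t =
    (if p == f x then F x else 0) + \sum_(t <- l | f t == p) F t.
  by move=> p; rewrite big_cons eq_sym; case: ifP; rewrite ?add0r.
under eq_bigr do rewrite E.
rewrite big_split /= sum_if_eq //; last by apply: Hl; rewrite mem_head.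
rewrite IH ?big_cons // => t tl; apply: Hl; by rewrite in_cons tl orbT.
Qed.

Section Mod.
Variables (K : fieldType) (M : lmodType K) (s : nat) (deg : 'I_s -> nat)
  (Y : 'I_s -> M -> M) (G : int -> int -> M -> Prop).
Hypothesis HB : bigraded_module deg Y G.

Lemma Ylin i (a : K) (x y : M) : Y i (a *: x + y) = a *: Y i x + Y i y.
Proof. by case: HB => [[H _] _]; apply: H. Qed.
Lemma Ycomm i j x : Y i (Y j x) = Y j (Y i x).
Proof. by case: HB => [[_ H] _]; apply: H. Qed.
Lemma G0 d k : G d k 0.
Proof. by case: HB => [_ [H _]]. Qed.
Lemma Gcl d k (a : K) (x y : M) : G d k x -> G d k y -> G d k (a *: x + y).
Proof. by case: HB => [_ [_ [H _]]]; apply: H. Qed.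
Lemma Gdecomp (m : M) : exists (ds : seq (int * int)) (xs : int * int -> M),
      (forall p, p \in ds -> G p.1 p.2 (xs p)) /\ m = \sum_(p <- ds) xs p.
Proof. by case: HB => [_ [_ [_ [H _]]]]. Qed.
Lemma Gdirect (ds : seq (int * int)) (xs : int * int -> M) :
      uniq ds -> (forall p, p \in ds -> G p.1 p.2 (xs p)) ->
      \sum_(p <- ds) xs p = 0 -> forall p, p \in ds -> xs p = 0.
Proof. by case: HB => [_ [_ [_ [_ [H _]]]]]; apply: H. Qed.
Lemma Gact i d k (x : M) : G d k x -> G (d + (deg i)%:Z) (k + 1) (Y i x).
Proof. by case: HB => [_ [_ [_ [_ [_ H]]]]]; apply: H. Qed.

Lemma Y0 i : Y i 0 = 0.
Proof.
have H := Ylin i 1 0 0; rewrite !scale1r addr0 in H.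
have := congr1 (fun z => z - Y i 0) H; rewrite /= addrK subrr => <-//.
Qed.
Lemma YD i x y : Y i (x + y) = Y i x + Y i y.
Proof. by rewrite -{1}(scale1r x) Ylin scale1r. Qed.
Lemma YZ i a x : Y i (a *: x) = a *: Y i x.
Proof. by rewrite -[a *: x]addr0 Ylin Y0 addr0. Qed.
Lemma Ysum i (I : Type) (r : seq I) (F : I -> M) :
  Y i (\sum_(j <- r) F j) = \sum_(j <- r) Y i (F j).
Proof.
elim: r => [|x r IH]; first by rewrite !big_nil Y0.
by rewrite !big_cons YD IH.
Qed.

Definition Ym (w : seq 'I_s) (h : M) := foldr Y h w.
Definition sdeg (w : seq 'I_s) := (\sum_(j <- w) deg j)%N.

Lemma Ym0 w : Ym w 0 = 0.
Proof. by elim: w => //= i w ->; exact: Y0. Qed.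
Lemma Ym_comm i w x : Y i (Ym w x) = Ym w (Y i x).
Proof. by elim: w => //= j w IH; rewrite (Ycomm i j) IH. Qed.
Lemma Ym_cat w1 w2 x : Ym (w1 ++ w2) x = Ym w1 (Ym w2 x).
Proof. exact: foldr_cat. Qed.
Lemma Ym_rem i w x : i \in w -> Ym w x = Y i (Ym (rem i w) x).
Proof.
elim: w => //= j w IH; rewrite in_cons => /orP[/eqP ->|iw].
  by rewrite eqxx.
case: eqP => [->//|_] /=.
by rewrite (IH iw) Ycomm.
Qed.
Lemma Ym_count i N w x : (N <= count_mem i w)%N ->
  exists w', Ym w x = Ym w' (Ym (nseq N i) x).
Proof.
elim: N w => [|N IH] w H; first by exists w.
have iw : i \in w by rewrite -has_pred1 has_count; apply: leq_trans H.
have := H; rewrite (permP (perm_to_rem iw)) /= eqxx add1n ltnS => /IH.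
move=> [w' E]; exists w'.
by rewrite (Ym_rem i w x iw) E Ym_comm.
Qed.

Lemma Gsub d k x y : G d k x -> G d k y -> G d k (x - y).
Proof.
move=> Gx Gy.
have : G d k ((-1) *: y + 0) by apply: Gcl => //; apply: G0.
rewrite addr0 scaleN1r => Gny.
by rewrite -[x]scale1r; apply: Gcl.
Qed.

Lemma Gsum d k (I : eqType) (r : seq I) (P : pred I) F :
  (forall i, i \in r -> P i -> G d k (F i)) -> G d k (\sum_(i <- r | P i) F i).
Proof.
move=> H; rewrite big_seq_cond.
elim/big_rec: _ => [|i x /andP[ir Pi] Gx]; first exact: G0.
by rewrite -[F i]scale1r; apply: Gcl => //; apply: H.
Qed.

Lemma GYm e f h w : G e f h -> G (e + (sdeg w)%:Z) (f + (size w)%:Z) (Ym w h).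
Proof.
elim: w => [|i w IH] Gh /=.
  by rewrite /sdeg big_nil !addr0.
have E1 : e + (sdeg (i :: w))%:Z = e + (sdeg w)%:Z + (deg i)%:Z.
  by rewrite /sdeg big_cons; lia.
have E2 : f + (size (i :: w))%:Z = f + (size w)%:Z + 1 by rewrite /=; lia.
by rewrite E1 E2; apply: Gact; apply: IH.
Qed.

Definition TT := (K * seq 'I_s * ((int * int) * M))%type.
Definition val (t : TT) := t.1.1 *: Ym t.1.2 t.2.2.

Definition spans (hg : seq ((int * int) * M)) (x : M) :=
  exists l : seq TT, (forall t, t \in l -> t.2 \in hg) /\ x = \sum_(t <- l) val t.

Lemma span_gen hg gens : (forall x, x \in gens -> spans hg x) ->
  forall m, generated_by Y gens m -> spans hg m.
Proof.
move=> H m; elim=> {m}.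
- exact: H.
- by exists [::]; rewrite big_nil.
- move=> x y _ [l1 [H1 ->]] _ [l2 [H2 ->]]; exists (l1 ++ l2); split.
    by move=> t; rewrite mem_cat => /orP[/H1|/H2].
  by rewrite big_cat.
- move=> a x _ [l [Hl ->]].
  exists (map (fun t : TT => (a * t.1.1, t.1.2, t.2)) l); split.
    by move=> t /mapP[u ul ->]; exact: Hl u ul.
  rewrite (big_map _ xpredT) scaler_sumr; apply: eq_bigr => t _.
  by rewrite /val scalerA.
- move=> i x _ [l [Hl ->]].
  exists (map (fun t : TT => (t.1.1, i :: t.1.2, t.2)) l); split.
    by move=> t /mapP[u ul ->]; exact: Hl u ul.
  rewrite (big_map _ xpredT) Ysum; apply: eq_bigr => t _.
  by rewrite /val YZ.
Qed.

Lemma homog_gens (gens : seq M) : exists hg,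
  (forall q, q \in hg -> G q.1.1 q.1.2 q.2) /\
  forall x, x \in gens -> spans hg x.
Proof.
elim: gens => [|x gens [hg [Hhg Hx]]].
  by exists [::]; split.
have [ds [xs [Hds Ex]]] := Gdecomp x.
exists (map (fun p => (p, xs p)) ds ++ hg); split.
  move=> q; rewrite mem_cat => /orP[/mapP[p pd ->]|]; last exact: Hhg.
  exact: Hds.
move=> y; rewrite in_cons => /orP[/eqP ->|yg].
  exists (map (fun p => ((1 : K), [::] : seq 'I_s, (p, xs p))) ds); split.
    move=> t /mapP[p pd ->] /=; rewrite mem_cat; apply/orP; left.
    by apply: map_f.
  by rewrite big_map Ex; apply: eq_bigr => p _; rewrite /val scale1r.
have [l [Hl ->]] := Hx y yg; exists l; split => // t /Hl th.
by rewrite mem_cat th orbT.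
Qed.

Lemma comp_nz_char hg (Hhg : forall q, q \in hg -> G q.1.1 q.1.2 q.2)
  (Hsp : forall m, spans hg m) d k :
  comp_nz G d k -> exists q w, q \in hg /\ Ym w q.2 <> 0 /\
     d = q.1.1 + (sdeg w)%:Z /\ k = q.1.2 + (size w)%:Z.
Proof.
move=> [m [Gm mnz]].
have [l [Hl Em]] := Hsp m.
apply: NNPP => Hno.
pose bideg (t : TT) := (t.2.1.1 + (sdeg t.1.2)%:Z, t.2.1.2 + (size t.1.2)%:Z).
have zero : forall t, t \in l -> bideg t == (d, k) -> val t = 0.
  move=> t tl /eqP [E1 E2].
  case: (classic (Ym t.1.2 t.2.2 = 0)) => [E|NE]; first by rewrite /val E scaler0.
  by exfalso; apply: Hno; exists t.2, t.1.2; split; [apply: Hl|].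
pose ds := undup ((d, k) :: map bideg l).
pose xs p := \sum_(t <- l | bideg t == p) val t - (if p == (d, k) then m else 0).
have dkin : (d, k) \in ds by rewrite mem_undup mem_head.
have Gv : forall t, t \in l -> G (bideg t).1 (bideg t).2 (val t).
  move=> t tl; rewrite /val -[_ *: _]addr0; apply: Gcl; last exact: G0.
  by apply: GYm; apply: Hhg; apply: Hl.
have Hx0 : xs (d, k) = 0.
  apply: (@Gdirect ds xs (undup_uniq _)) => //.
  - move=> p pd; apply: Gsub.
      by apply: Gsum => t tl /eqP <-; apply: Gv.
    by case: eqP => [->|_]; [exact: Gm| exact: G0].
  - rewrite /xs sumrB sum_group ?undup_uniq //; last first.
      by move=> t tl; rewrite mem_undup in_cons map_f ?orbT.
    by rewrite sum_if_eq ?undup_uniq // -Em subrr.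
move: Hx0; rewrite /xs eqxx big1_seq ?sub0r.
  by move/eqP; rewrite oppr_eq0 => /eqP.
by move=> t /andP[E tl]; apply: zero.
Qed.


Lemma sum_count (F : 'I_s -> nat) w :
  (\sum_(j <- w) F j = \sum_(i < s) count_mem i w * F i)%N.
Proof.
elim: w => [|x w IH].
  by rewrite big_nil big1.
rewrite big_cons IH /=.
under [in RHS]eq_bigr do rewrite mulnDl.
rewrite big_split /=; congr (_ + _)%N.
rewrite (bigD1 x) //= eqxx mul1n big1 ?addn0 // => i /negbTE.
by rewrite eq_sym => ->.
Qed.

Lemma size_count w : size w = (\sum_(i < s) count_mem i w)%N.
Proof. by rewrite -sum1_size sum_count; under eq_bigr do rewrite muln1. Qed.

Lemma sdeg_nseq n i : sdeg (nseq n i) = (n * deg i)%N.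
Proof. by elim: n => [|n IH]; rewrite /sdeg ?big_nil // big_cons -/(sdeg _) IH mulSn. Qed.

Definition U (q : (int * int) * M) i := forall N, Ym (nseq N i) q.2 <> 0.

Lemma bound_seq (T : eqType) (X : seq T) (P : T -> nat -> Prop) :
  (forall x N N', (N <= N')%N -> P x N -> P x N') ->
  (forall x, x \in X -> exists N, P x N) -> exists N, forall x, x \in X -> P x N.
Proof.
move=> mono; elim: X => [|x X IH] H; first by exists 0%N.
have [N1 H1] := H x (mem_head _ _).
have [|N2 H2] := IH; first by move=> y yX; apply: H; rewrite in_cons yX orbT.
exists (maxn N1 N2) => y; rewrite in_cons => /orP[/eqP ->|yX].
  by apply: mono H1; apply: leq_maxl.
by apply: mono (H2 _ yX); apply: leq_maxr.
Qed.

Lemma Ym_nseq_mono N N' i h : (N <= N')%N -> Ym (nseq N i) h = 0 -> Ym (nseq N' i) h = 0.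
Proof.
move=> le E; rewrite -(subnK le) nseqD Ym_cat E; exact: Ym0.
Qed.

Lemma exB (hg : seq ((int * int) * M)) :
  exists B, forall q, q \in hg -> forall i, ~ U q i -> Ym (nseq B i) q.2 = 0.
Proof.
apply: (@bound_seq _ hg (fun q N => forall i, ~ U q i -> Ym (nseq N i) q.2 = 0)).
  by move=> q N N' le H i /H; apply: Ym_nseq_mono le.
move=> q _.
have H1 : forall i, i \in enum 'I_s -> exists N, ~ U q i -> Ym (nseq N i) q.2 = 0.
  move=> i _; case: (classic (U q i)) => Ui.
    by exists 0%N.
  have [N HN] := not_all_ex_not _ _ Ui.
  by exists N => _; apply: NNPP.
have [N HN] := @bound_seq _ (enum 'I_s) (fun i N => ~ U q i -> Ym (nseq N i) q.2 = 0)
  (fun i N N' le H nU => Ym_nseq_mono _ _ _ _ le (H nU)) H1.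
by exists N => i; apply: HN; rewrite mem_enum.
Qed.

Lemma cnt_lt B (q : (int * int) * M) i w : Ym (nseq B i) q.2 = 0 -> Ym w q.2 <> 0 -> (count_mem i w < B)%N.
Proof.
move=> E nz; rewrite ltnNge; apply/negP => le.
have [w' Ew] := Ym_count i B w q.2 le.
by apply: nz; rewrite Ew E Ym0.
Qed.

Lemma exists_unb B (q : (int * int) * M) w : (forall i, ~ U q i -> Ym (nseq B i) q.2 = 0) ->
  Ym w q.2 <> 0 -> (s * B < size w)%N -> exists i, i \in w /\ U q i.
Proof.
move=> HB0 nz lt; apply: NNPP => Hno.
have cb : forall i, (count_mem i w <= B)%N.
  move=> i; case iw : (i \in w).
    case: (classic (U q i)) => Ui; first by exfalso; apply: Hno; exists i.
    by apply: ltnW; apply: cnt_lt nz; apply: HB0.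
  by rewrite (count_memPn (negbT iw)).
have : (size w <= s * B)%N.
  rewrite size_count; apply: (@leq_trans (\sum_(i < s) B)%N).
    by apply: leq_sum => i _; apply: cb.
  by rewrite sum_nat_const card_ord.
by rewrite leqNgt lt.
Qed.

Definition Dsum := (\sum_(i < s) deg i)%N.

Lemma sdeg_upper B (q : (int * int) * M) w c : (forall i, ~ U q i -> Ym (nseq B i) q.2 = 0) ->
  (forall i, U q i -> (deg i <= c)%N) -> Ym w q.2 <> 0 ->
  (sdeg w <= c * size w + B * Dsum)%N.
Proof.
move=> HB0 Hc nz.
rewrite /sdeg sum_count size_count /Dsum !big_distrr -big_split /=.
apply: leq_sum => i _; case: (classic (U q i)) => Ui.
  by rewrite mulnC; apply: leq_trans (leq_addr _ _); apply: leq_mul => //; apply: Hc.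
apply: leq_trans (leq_addl _ _); apply: leq_mul => //.
by apply: ltnW; apply: cnt_lt nz; apply: HB0.
Qed.

Lemma sdeg_lower B (q : (int * int) * M) w a : (forall i, ~ U q i -> Ym (nseq B i) q.2 = 0) ->
  (forall i, U q i -> (a <= deg i)%N) -> Ym w q.2 <> 0 ->
  (a * size w <= sdeg w + a * (s * B))%N.
Proof.
move=> HB0 Ha nz.
have -> : (a * (s * B) = \sum_(i < s) a * B)%N.
  by rewrite sum_nat_const card_ord mulnCA.
rewrite /sdeg sum_count size_count !big_distrr -big_split /=.
apply: leq_sum => i _; case: (classic (U q i)) => Ui.
  by rewrite mulnC; apply: leq_trans (leq_addr _ _); apply: leq_mul => //; apply: Ha.
apply: leq_trans (leq_addl _ _); apply: leq_mul => //.
by apply: ltnW; apply: cnt_lt nz; apply: HB0.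
Qed.


Lemma int_bound (T : eqType) (X : seq T) (f : T -> int) :
  exists u, forall x, x \in X -> f x <= u.
Proof.
elim: X => [|x X [u Hu]]; first by exists 0.
exists (Num.max (f x) u) => y; rewrite in_cons => /orP[/eqP ->|yX].
  by rewrite le_max lexx.
by rewrite le_max Hu ?orbT.
Qed.

Lemma main_sec : finitely_generated Y ->
  (exists k0 : int, forall k : int, k0 <= k -> forall d : int, ~ comp_nz G d k) \/
  (exists a b c e : int, exists k0 : int, forall k : int, k0 <= k ->
      is_alpha G k (a * k + b) /\ is_omega G k (c * k + e)).
Proof.
move=> [gens Hg].
have [hg [Hhg Hsp0]] := homog_gens gens.
have Hsp : forall m, spans hg m := fun m => span_gen hg gens Hsp0 m (Hg m).
have [B HBd] := exB hg.
have [fmax Hfmax] := int_bound _ hg (fun q => q.1.2).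
have [mfmin Hfmin] := int_bound _ hg (fun q => - q.1.2).
have [emax Hemax] := int_bound _ hg (fun q => q.1.1).
have [memin Hemin] := int_bound _ hg (fun q => - q.1.1).
have char := comp_nz_char hg Hhg Hsp.
have wit : forall q i, q \in hg -> U q i -> forall k : int, q.1.2 <= k ->
    comp_nz G (q.1.1 + (deg i)%:Z * (k - q.1.2)) k.
  move=> q i qh Ui k fk.
  have E : (`|k - q.1.2|%N : int) = k - q.1.2 by rewrite gez0_abs // subr_ge0.
  exists (Ym (nseq `|k - q.1.2|%N i) q.2); split; last exact: Ui.
  have := GYm _ _ _ (nseq `|k - q.1.2|%N i) (Hhg q qh).
  rewrite sdeg_nseq size_nseq.
  have -> : q.1.1 + (`|k - q.1.2|%N * deg i)%N%:Z = q.1.1 + (deg i)%:Z * (k - q.1.2).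
    by rewrite PoszM E mulrC.
  by have -> : q.1.2 + (`|k - q.1.2|%N)%:Z = k by rewrite E addrC subrK.
have step : forall k : int, fmax + (s * B)%N%:Z <= k -> forall d, comp_nz G d (k + 1) ->
    exists d' q i, q \in hg /\ U q i /\ comp_nz G d' k /\ d = d' + (deg i)%:Z.
  move=> k kk d Sd.
  have [q [w [qh [nz [Ed Ek]]]]] := char _ _ Sd.
  have fq : q.1.2 <= fmax := Hfmax q qh.
  have lt : (s * B < size w)%N.
    have : (s * B)%N%:Z < (size w)%:Z by move: kk Ek fq; set sb := (s * B)%N; lia.
    by rewrite ltz_nat.
  have [i [iw Ui]] := exists_unb B q w (HBd q qh) nz lt.
  have nz' : Ym (rem i w) q.2 <> 0.
    by move=> E; apply: nz; rewrite (Ym_rem i w q.2 iw) E Y0.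
  have Esz : size w = (size (rem i w)).+1 by rewrite (perm_size (perm_to_rem iw)).
  have Esd : sdeg w = (deg i + sdeg (rem i w))%N.
    by rewrite /sdeg (perm_big _ (perm_to_rem iw)) big_cons.
  exists (q.1.1 + (sdeg (rem i w))%:Z), q, i; split => //; split => //; split.
    have -> : k = q.1.2 + (size (rem i w))%:Z by move: Ek; rewrite Esz; lia.
    by exists (Ym (rem i w) q.2); split => //; apply: GYm; apply: Hhg.
  by rewrite Ed Esd; lia.
case: (classic (exists q i, q \in hg /\ U q i)) => [[q0 [i0 [q0h U0]]]|NU]; last first.
  left; exists (fmax + (s * B)%N%:Z + 1) => k kk d Sd.
  have [q [w [qh [nz [Ed Ek]]]]] := char _ _ Sd.
  have fq : q.1.2 <= fmax := Hfmax q qh.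
  case: (ltnP (s * B) (size w)) => lt.
    have [i [_ Ui]] := exists_unb B q w (HBd q qh) nz lt.
    by apply: NU; exists q, i.
  have : (size w)%:Z <= (s * B)%N%:Z by rewrite lez_nat.
  lia.
right.
pose Pd v := exists q i, q \in hg /\ U q i /\ v = (deg i)%:Z.
have ne : exists v, Pd v by exists (deg i0)%:Z, q0, i0.
have cb : forall v, Pd v -> v <= (\max_(j < s) deg j)%N%:Z.
  by move=> v [q [i [_ [_ ->]]]]; rewrite lez_nat; apply: leq_bigmax.
have [cv [[qc [ic [qch [Uc Ecv]]]] Hcv]] := @int_max_ex Pd _ ne cb.
have ab : forall v, Pd v -> 0 <= v by move=> v [q [i [_ [_ ->]]]].
have [av [[qa [ia [qah [Ua Eav]]]] Hav]] := @int_min_ex Pd 0 ne ab.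
set c := deg ic. set a := deg ia.
have Hc : forall q i, q \in hg -> U q i -> (deg i <= c)%N.
  move=> q i qh Ui; rewrite -lez_nat.
  have := Hcv (deg i)%:Z (ex_intro _ q (ex_intro _ i (conj qh (conj Ui erefl)))).
  by rewrite Ecv.
have Ha : forall q i, q \in hg -> U q i -> (a <= deg i)%N.
  move=> q i qh Ui; rewrite -lez_nat.
  have := Hav (deg i)%:Z (ex_intro _ q (ex_intro _ i (conj qh (conj Ui erefl)))).
  by rewrite Eav.
have [e [k0 Ho]] : exists e k0, forall k : int, k0 <= k ->
    comp_nz G (c%:Z * k + e) k /\ (forall d, comp_nz G d k -> d <= c%:Z * k + e).
  apply: (@omega_lin (fun k d => comp_nz G d k) c%:Z
  (qc.1.1 - c%:Z * qc.1.2) (emax + mfmin * c%:Z + (B * Dsum)%N%:Z)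
  (fmax + (s * B)%N%:Z)).
- move=> k kk d Sd.
  have [q [w [qh [nz [Ed Ek]]]]] := char _ _ Sd.
  have h1 := sdeg_upper B q w c (HBd q qh) (fun i Ui => Hc q i qh Ui) nz.
  have h1' : (sdeg w)%:Z <= c%:Z * (size w)%:Z + (B * Dsum)%N%:Z.
    by rewrite -PoszM -PoszD lez_nat.
  have fq : - q.1.2 <= mfmin := Hfmin q qh.
  have eq : q.1.1 <= emax := Hemax q qh.
  move: h1'; set BD := (B * Dsum)%N%:Z; rewrite Ed Ek; nia.
- move=> k kk.
  have fq : qc.1.2 <= fmax := Hfmax qc qch.
  have := wit qc ic qch Uc k ltac:(set sb := (s * B)%N in kk; lia).
  by have -> : c%:Z * k + (qc.1.1 - c%:Z * qc.1.2) = qc.1.1 + c%:Z * (k - qc.1.2)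
    by rewrite mulrBr addrCA addrA.
- move=> k kk d Sd.
  have [d' [q [i [qh [Ui [Sd' ->]]]]]] := step k kk d Sd.
  exists d'; split => //.
  by have := Hc q i qh Ui; rewrite -lez_nat; lia.
have [e' [k0' Ha']] : exists e k0, forall k : int, k0 <= k ->
    comp_nz G (- (- a%:Z * k + e)) k /\ (forall d, comp_nz G (- d) k -> d <= - a%:Z * k + e).
  apply: (@omega_lin (fun k d => comp_nz G (- d) k) (- a%:Z)
  (- (qa.1.1 - a%:Z * qa.1.2)) (memin + a%:Z * fmax + (a * (s * B))%N%:Z)
  (fmax + (s * B)%N%:Z)).
- move=> k kk d Sd.
  have [q [w [qh [nz [Ed Ek]]]]] := char _ _ Sd.
  have h1 := sdeg_lower B q w a (HBd q qh) (fun i Ui => Ha q i qh Ui) nz.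
  have h1' : a%:Z * (size w)%:Z <= (sdeg w)%:Z + (a * (s * B))%N%:Z.
    by rewrite -PoszM -PoszD lez_nat.
  have fq : q.1.2 <= fmax := Hfmax q qh.
  have eq : - q.1.1 <= memin := Hemin q qh.
  move: h1'; set ASB := (a * (s * B))%N%:Z.
  have Ed' : d = - (q.1.1 + (sdeg w)%:Z) by rewrite -Ed opprK.
  rewrite Ed' Ek; nia.
- move=> k kk.
  have fq : qa.1.2 <= fmax := Hfmax qa qah.
  have := wit qa ia qah Ua k ltac:(set sb := (s * B)%N in kk; lia).
  by have -> : - (- a%:Z * k + - (qa.1.1 - a%:Z * qa.1.2)) = qa.1.1 + a%:Z * (k - qa.1.2)
    by rewrite mulNr opprD !opprK mulrBr addrCA addrA.
- move=> k kk d Sd.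
  have [d' [q [i [qh [Ui [Sd' Ed]]]]]] := step k kk (- d) Sd.
  exists (- d'); split; first by rewrite opprK.
  by have := Ha q i qh Ui; rewrite -lez_nat; lia.
exists a%:Z, (- e'), c%:Z, e, (Num.max k0 k0') => k.
rewrite ge_max => /andP[h0 h0'].
have [Sk Sk'] := Ho k h0.
have [Ak Ak'] := Ha' k h0'.
split; split.
- by have -> : a%:Z * k + - e' = - (- a%:Z * k + e') by rewrite opprD mulNr opprK.
- move=> d Sd; have := Ak' (- d); rewrite opprK => /(_ Sd).
  by rewrite mulNr; lia.
- exact: Sk.
- exact: Sk'.
Qed.

End Mod.

Theorem proposition2p5 (K : fieldType) (s : nat) (deg : 'I_s -> nat)
    (M : lmodType K) (Y : 'I_s -> M -> M) (G : int -> int -> M -> Prop) :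
  (forall i, (0 < deg i)%N) ->
  bigraded_module deg Y G ->
  finitely_generated Y ->
  (exists k0 : int, forall k : int, k0 <= k -> forall d : int, ~ comp_nz G d k) \/
  (exists a b c e : int, exists k0 : int, forall k : int, k0 <= k ->
      is_alpha G k (a * k + b) /\ is_omega G k (c * k + e)).
Proof.
move=> _ HB0 Hfg.
exact: (@main_sec K M s deg Y G HB0 Hfg).
Qed.
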